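(* Let $s\le L$ be positive integers, $\mathbf{D}\in\mathbb{R}^{N\times N}$, $\mathbf{H}\in\mathbb{R}^{N\times L}$, and consider the system $\mathbf{x}_k=\mathbf{D}\mathbf{x}_{k-1}+\mathbf{H}\mathbf{h}_k$ where the inputs $\mathbf{h}_k\in\mathbb{R}^L$ are $s$-sparse with a common support, i.e. there is a fixed $\mathcal{S}\subseteq\{1,\dots,L\}$ with $|\mathcal{S}|=s$ such that all nonzero entries of every $\mathbf{h}_k$ lie in $\mathcal{S}$. Suppose the system is controllable using $s$-sparse inputs with a common support, and let $K^*$ be the minimum number of such input vectors required to steer the system from any initial state to any final state. With $R^*_{\mathbf{H},s}=\min\{\operatorname{rank}(\mathbf{H}),s\}$ and $q$ the degree of the minimal polynomial of $\mathbf{D}$, $$\frac{N}{R^*_{\mathbf{H},s}}\le K^*\le\min\{q,\ N-R^*_{\mathbf{H},s}+1\}\le N.$$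
   Context: The system is controllable using $s$-sparse inputs with a common support if there exists $\mathcal{S}\subseteq\{1,\dots,L\}$, $|\mathcal{S}|=s$, such that for every initial state $\mathbf{x}_0$ and final state $\mathbf{x}_{\mathrm{final}}$ in $\mathbb{R}^N$ there exist finite $K$ and inputs $\mathbf{h}_1,\dots,\mathbf{h}_K$ supported in $\mathcal{S}$ with $\mathbf{x}_K=\mathbf{x}_{\mathrm{final}}$; equivalently the pair $(\mathbf{D},\mathbf{H}_{\mathcal{S}})$ is controllable, where $\mathbf{H}_{\mathcal{S}}$ denotes the columns of $\mathbf{H}$ indexed by $\mathcal{S}$. *)

(* Defs.v *)
From HB Require Import structures.
From mathcomp Require Import all_boot all_order all_algebra.
Set Implicit Arguments. Unset Strict Implicit. Unset Printing Implicit Defensive.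
Import Order.TTheory GRing.Theory Num.Theory.
Local Open Scope ring_scope.

(* State trajectory of x_k = D x_{k-1} + H h_k, starting from x_0;
   inputs h_1, h_2, ... given by h : nat -> 'cV_L (h 0 is unused). *)
Fixpoint traj (R : ringType) (N L : nat) (D : 'M[R]_N) (H : 'M[R]_(N, L))
  (x0 : 'cV[R]_N) (h : nat -> 'cV[R]_L) (k : nat) : 'cV[R]_N :=
  match k with
  | 0 => x0
  | k'.+1 => D *m traj D H x0 h k' + H *m h k'.+1
  end.

Definition supported_in (R : ringType) (L : nat) (S : {set 'I_L}) (v : 'cV[R]_L) :=
  forall i : 'I_L, i \notin S -> v i 0 = 0.

Definition sparse_controllable (R : ringType) (N L : nat)
  (D : 'M[R]_N) (H : 'M[R]_(N, L)) (s : nat) :=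
  exists S : {set 'I_L}, #|S| = s /\
    forall x0 xf : 'cV[R]_N, exists (K : nat) (h : nat -> 'cV[R]_L),
      (forall k, (1 <= k <= K)%N -> supported_in S (h k)) /\ traj D H x0 h K = xf.

Definition steerable_in (R : ringType) (N L : nat)
  (D : 'M[R]_N) (H : 'M[R]_(N, L)) (s K : nat) :=
  exists S : {set 'I_L}, #|S| = s /\
    forall x0 xf : 'cV[R]_N, exists h : nat -> 'cV[R]_L,
      (forall k, (1 <= k <= K)%N -> supported_in S (h k)) /\ traj D H x0 h K = xf.

(* Main.v *)
Require Import Defs.
From HB Require Import structures.
From mathcomp Require Import all_boot all_order all_algebra zify.
Set Implicit Arguments. Unset Strict Implicit. Unset Printing Implicit Defensive.
Import Order.TTheory GRing.Theory Num.Theory.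
Local Open Scope ring_scope.

Section Aux.
Variables (R : fieldType) (n L : nat).
Local Notation N := n.+1.
Variables (D : 'M[R]_N) (H : 'M[R]_(N, L)).

Lemma trmxX (A : 'M[R]_N) i : (A ^+ i)^T = A^T ^+ i.
Proof.
elim: i => [|i IH]; first by rewrite !expr0 trmx1.
by rewrite exprS -mulmxE trmx_mul IH mulmxE -exprSr.
Qed.

Lemma traj_formula x0 h K :
  traj D H x0 h K = D ^+ K *m x0 + \sum_(i < K) D ^+ i *m (H *m h (K - i)%N).
Proof.
elim: K => [|K IH] /=; first by rewrite expr0 mul1mx big_ord0 addr0.
have eS k : D *m D ^+ k = D ^+ k.+1 by rewrite exprS.
rewrite IH mulmxDr mulmxA eS big_ord_recl /= expr0 mul1mx subn0.
rewrite mulmx_sumr -addrA; congr (_ + _); rewrite addrC; congr (_ + _).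
apply: eq_bigr => i _; by rewrite [D *m (_ *m _)]mulmxA eS /bump leq0n add1n subSS.
Qed.

Definition Bm (X : {set 'I_L}) : 'M[R]_(L, N) :=
  \matrix_(j, k) (if j \in X then H k j else 0).

Definition Vk X K : 'M[R]_N := (\sum_(i < K) <<Bm X *m D^T ^+ i>>)%MS.

Definition hvec (X : {set 'I_L}) (u : 'rV[R]_L) : 'cV[R]_L :=
  \col_j (if j \in X then u 0 j else 0).

Lemma hvec_supp X u : supported_in X (hvec X u).
Proof. by move=> i /negPf Hi; rewrite mxE Hi. Qed.

Lemma mul_Bm X u : u *m Bm X = (H *m hvec X u)^T.
Proof.
apply/rowP => k; rewrite !mxE; apply: eq_bigr => j _; rewrite !mxE.
by case: (j \in X); rewrite ?mulr0 ?mul0r // mulrC.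
Qed.

Lemma supp_Bm X h : supported_in X h -> (H *m h)^T = h^T *m Bm X.
Proof.
move=> Hs; apply/rowP => k; rewrite !mxE; apply: eq_bigr => j _; rewrite !mxE.
case: (boolP (j \in X)) => Hj; first by rewrite mulrC.
by rewrite Hs // mulr0 mul0r.
Qed.

Lemma row_Bm X j : row j (Bm X) = if j \in X then row j H^T else 0.
Proof. by apply/rowP => k; rewrite !mxE; case: (j \in X); rewrite ?mxE. Qed.

Lemma Bm_mono (X Y : {set 'I_L}) : X \subset Y -> (Bm X <= Bm Y)%MS.
Proof.
move=> sXY; apply/row_subP => j; rewrite row_Bm.
case: ifP => Hj; last by rewrite sub0mx.
by have := row_sub j (Bm Y); rewrite row_Bm (subsetP sXY j Hj).
Qed.

Lemma Vk_monoB X Y K : (Bm X <= Bm Y)%MS -> (Vk X K <= Vk Y K)%MS.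
Proof.
move=> sXY; apply: sumsmxS => i _; rewrite !genmxE; exact: submxMr.
Qed.

Lemma mem_Vk X K i : (i < K)%N -> (Bm X *m D^T ^+ i <= Vk X K)%MS.
Proof.
move=> iK; apply: (sumsmx_sup (Ordinal iK)) => //; by rewrite genmxE.
Qed.

Lemma Vk_monoK X K K' : (K <= K')%N -> (Vk X K <= Vk X K')%MS.
Proof.
move=> le; apply/sumsmx_subP => i _; rewrite genmxE; apply: mem_Vk.
exact: leq_trans (ltn_ord i) le.
Qed.

Lemma Vk_closed X K : (Bm X *m D^T ^+ K <= Vk X K)%MS ->
  forall m, (Vk X m <= Vk X K)%MS.
Proof.
move=> HK.
suff all_i : forall i, (Bm X *m D^T ^+ i <= Vk X K)%MS.
  by move=> m; apply/sumsmx_subP => i _; rewrite genmxE.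
move=> i; elim: i {-2}i (leqnn i) => [|b IHb] i lei.
  case: (ltnP i K) => iK; first exact: mem_Vk.
  by move: lei; rewrite leqn0 => /eqP Ei; move: iK HK; rewrite Ei leqn0 => /eqP ->.
case: (ltnP i K) => iK; first exact: mem_Vk.
have [m Ei] : exists m, i = (K + m)%N by exists (i - K)%N; rewrite subnKC.
subst i.
case/sub_sumsmxP: HK => u Hu.
have eM (A B : 'M[R]_N) : A * B = A *m B by [].
rewrite exprD eM mulmxA Hu mulmx_suml.
apply: summx_sub => j _.
rewrite -mulmxA; apply: submx_trans (submxMl _ _) _.
apply: (submx_trans (_ : <<Bm X *m D^T ^+ j>>%MS *m D^T ^+ m <= (Bm X *m D^T ^+ j) *m D^T ^+ m)%MS).
  by apply: submxMr; rewrite genmxE.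
rewrite -mulmxA -eM -exprD.
apply: IHb.
have := ltn_ord j; lia.
Qed.


Local Notation d := (degree_mxminpoly D).

Lemma powD : exists c : 'I_d -> R, D ^+ d = \sum_(i < d) c i *: D ^+ i.
Proof.
have := horner_mx_mem D ('X^d); rewrite rmorphXn /= horner_mx_X.
case/submxP => u Hu; exists (fun i => u 0 i).
apply: (can_inj (@mxvecK _ N N)); rewrite Hu mulmx_sum_row linear_sum.
by apply: eq_bigr => i _; rewrite rowK linearZ.
Qed.

Lemma Vk_d X m : (Vk X m <= Vk X d)%MS.
Proof.
apply: Vk_closed; have [c Hc] := powD.
have -> : D^T ^+ d = \sum_(i < d) c i *: D^T ^+ i.
  by rewrite -trmxX Hc linear_sum; apply: eq_bigr => i _; rewrite linearZ /= ?trmxX.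
rewrite mulmx_sumr; apply: summx_sub => i _.
by rewrite -scalemxAr scalemx_sub // mem_Vk.
Qed.

Lemma reach_mem X x0 h K : (forall k, (1 <= k <= K)%N -> supported_in X (h k)) ->
  ((traj D H x0 h K - D ^+ K *m x0)^T <= Vk X K)%MS.
Proof.
move=> Hs; rewrite traj_formula addrC addKr linear_sum.
apply: summx_sub => i _; rewrite /= trmx_mul trmxX (supp_Bm (X := X)); last first.
  by apply: Hs; have := ltn_ord i; lia.
by rewrite -mulmxA; apply: submx_trans (submxMl _ _) _; apply: mem_Vk.
Qed.

Lemma steer_from X K : row_full (Vk X K) -> forall x0 xf : 'cV_N,
  exists h, (forall k, supported_in X (h k)) /\ traj D H x0 h K = xf.
Proof.
move=> full x0 xf.
have : ((xf - D ^+ K *m x0)^T <= Vk X K)%MS by exact: submx_full.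
case/sub_sumsmxP => u Hu.
pose M (i : 'I_K) := Bm X *m D^T ^+ i.
pose w i := (u i *m <<M i>>%MS) *m pinvmx (M i).
have Hw i : u i *m <<M i>>%MS = w i *m M i.
  rewrite mulmxKpV //; apply: submx_trans (submxMl _ _) _; by rewrite genmxE.
exists (fun k => hvec X (oapp w 0 (insub (K - k)%N))); split=> [k|].
  exact: hvec_supp.
rewrite traj_formula.
suff -> : \sum_(i < K) D ^+ i *m (H *m hvec X (oapp w 0 (insub (K - (K - i))%N)))
   = xf - D ^+ K *m x0 by rewrite addrC subrK.
apply: (can_inj (@trmxK _ _ _)).
rewrite Hu linear_sum; apply: eq_bigr => i _ /=.
rewrite subKn ?(ltnW (ltn_ord i)) // valK /= Hw trmx_mul trmxX -mul_Bm mulmxA.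
by [].
Qed.

Lemma steer_iff s K : steerable_in D H s K <->
  exists X : {set 'I_L}, #|X| = s /\ row_full (Vk X K).
Proof.
split=> [[X [cX Hs]] | [X [cX F]]]; exists X; split => //.
  rewrite -sub1mx; apply/row_subP => j.
  have [h [Hh Ht]] := Hs 0 (row j 1%:M)^T.
  by have := reach_mem 0 Hh; rewrite Ht mulmx0 subr0 trmxK.
move=> x0 xf; have [h [Hh Ht]] := steer_from F x0 xf; exists h; split => // k _.
Qed.

Lemma ctrl_full s : sparse_controllable D H s ->
  exists X : {set 'I_L}, #|X| = s /\ row_full (Vk X d).
Proof.
case=> X [cX Hs]; exists X; split => //.
rewrite -sub1mx; apply/row_subP => j.
have [K [h [Hh Ht]]] := Hs 0 (row j 1%:M)^T.
apply: submx_trans (Vk_d X K).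
by have := reach_mem 0 Hh; rewrite Ht mulmx0 subr0 trmxK.
Qed.

Lemma rank_sum_le (I : finType) (P : pred I) (A : I -> 'M[R]_N) :
  (\rank (\sum_(i | P i) A i)%MS <= \sum_(i | P i) \rank (A i))%N.
Proof.
apply: (big_ind2 (fun (M : 'M[R]_N) r => (\rank M <= r)%N)).
- by rewrite mxrank0.
- move=> M1 r1 M2 r2 h1 h2; apply: leq_trans (leq_add h1 h2).
  exact: leq_of_leqif (mxrank_adds_leqif _ _).
- by [].
Qed.

Lemma rank_Bm_H X : (\rank (Bm X) <= \rank H)%N.
Proof.
rewrite -[\rank H]mxrank_tr; apply: mxrankS; apply/row_subP => j; rewrite row_Bm.
by case: ifP => _; rewrite ?row_sub ?sub0mx.
Qed.

Lemma rank_Bm_card X : (\rank (Bm X) <= #|X|)%N.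
Proof.
have : (Bm X <= \sum_(j in X) <<row j H^T>>)%MS.
  apply/row_subP => j; rewrite row_Bm; case: ifP => Hj; last by rewrite sub0mx.
  by apply: (sumsmx_sup j) => //; rewrite genmxE.
move/mxrankS => h; apply: leq_trans h _; apply: leq_trans (rank_sum_le _ _) _.
rewrite -sum1_card; apply: leq_sum => j _; rewrite mxrank_gen; exact: rank_leq_row.
Qed.

Lemma rank_Vk X K : (\rank (Vk X K) <= K * \rank (Bm X))%N.
Proof.
apply: leq_trans (rank_sum_le _ _) _.
rewrite -[X in (X * _)%N]card_ord -sum_nat_const; apply: leq_sum => i _.
rewrite mxrank_gen; exact: mxrankM_maxl.
Qed.

Lemma row_a_sub a U : (row a H^T <= Bm (a |: U))%MS.
Proof. by have := row_sub a (Bm (a |: U)); rewrite row_Bm setU11. Qed.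

Lemma Bm_add a U : (Bm (a |: U) <= Bm U + <<row a H^T>>)%MS.
Proof.
apply/row_subP => j; rewrite row_Bm in_setU1.
case: (eqVneq j a) => [->|_] /=.
  by apply: submx_trans (addsmxSr _ _); rewrite genmxE.
case: ifP => Hj; last by rewrite sub0mx.
apply: submx_trans (addsmxSl _ _); by have := row_sub j (Bm U); rewrite row_Bm Hj.
Qed.

Lemma addrow a U : ~~ (row a H^T <= Bm U)%MS -> #|U| = \rank (Bm U) ->
  #|a |: U| = \rank (Bm (a |: U)) /\ (Bm U <= Bm (a |: U))%MS.
Proof.
move=> na cU.
have sU : (Bm U <= Bm (a |: U))%MS by apply: Bm_mono; exact: subsetUr.
have aU : a \notin U.
  apply/negP => aU; move: na; have := row_sub a (Bm U); rewrite row_Bm aU => ->.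
  by [].
split => //; rewrite cardsU1 aU cU add1n; apply/eqP; rewrite eqn_leq; apply/andP; split.
  have lt := ltn_leqif (mxrank_leqif_sup sU).
  rewrite lt; apply/negP => h; move: na; by rewrite (submx_trans (row_a_sub a U) h).
apply: leq_trans (mxrankS (Bm_add a U)) _.
apply: leq_trans (leq_of_leqif (mxrank_adds_leqif _ _)) _.
rewrite -[(\rank (Bm U)).+1]addn1 leq_add2l mxrank_gen; exact: rank_leq_row.
Qed.

Lemma basis_ex (A : {set 'I_L}) : exists U : {set 'I_L},
  [/\ U \subset A, #|U| = \rank (Bm U) & (Bm A <= Bm U)%MS].
Proof.
have [k] := ubnP #|A|; elim: k A => // k IH A ltA.
case: (set_0Vmem A) => [-> | [a aA]].
  exists set0; split => //; first by apply/eqP; rewrite eqn_leq rank_Bm_card cards0.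
have ltA' : (#|A :\ a| < k)%N by move: ltA; rewrite (cardsD1 a A) aA.
have [U' [sU' cU' sBU']] := IH _ ltA'.
have BA : (Bm A <= Bm (A :\ a) + <<row a H^T>>)%MS.
  by have := Bm_add a (A :\ a); rewrite setD1K.
have sU'A : U' \subset A by apply: subset_trans sU' (subsetDl _ _).
case: (boolP (row a H^T <= Bm U')%MS) => ra.
  exists U'; split => //; apply: submx_trans BA _; rewrite addsmx_sub sBU'.
  by rewrite genmxE.
have [cU sU] := addrow ra cU'.
exists (a |: U'); split => //; first by rewrite subUset sub1set aA.
apply: submx_trans BA _; rewrite addsmx_sub (submx_trans sBU' sU) //.
by rewrite genmxE row_a_sub.
Qed.

Lemma extend_ex m (U : {set 'I_L}) : #|U| = \rank (Bm U) ->
  (#|U| <= m <= \rank H)%N -> exists U' : {set 'I_L},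
  [/\ U \subset U', #|U'| = \rank (Bm U') & #|U'| = m].
Proof.
move=> cU; elim: m => [|m IH] /andP [le1 le2].
  by exists U; split => //; apply/eqP; rewrite -leqn0.
case: (eqVneq #|U| m.+1) => [e|ne]; first by exists U.
have [U1 [s1 c1 e1]] : exists U1 : {set 'I_L},
    [/\ U \subset U1, #|U1| = \rank (Bm U1) & #|U1| = m].
  apply: IH; apply/andP; split; last exact: ltnW.
  by rewrite -ltnS ltn_neqAle ne le1.
have : ~~ (H^T <= Bm U1)%MS.
  apply/negP => /mxrankS; rewrite mxrank_tr -c1 e1; by rewrite leqNgt le2.
case/row_subPn => j nj.
have [cj sj] := addrow nj c1.
exists (j |: U1); split => //.
  by apply: subset_trans s1 (subsetUr _ _).
have jU : j \notin U1.
  by apply/negP => jU; move: nj; have := row_sub j (Bm U1); rewrite row_Bm jU => ->.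
by rewrite cardsU1 jU e1.
Qed.

Lemma superset_ex (X : {set 'I_L}) k : (#|X| <= k <= L)%N ->
  exists Y : {set 'I_L}, X \subset Y /\ #|Y| = k.
Proof.
elim: k => [|k IH] /andP [le1 le2].
  by exists X; split => //; apply/eqP; rewrite -leqn0.
case: (eqVneq #|X| k.+1) => [e|ne]; first by exists X.
have [Y [sY cY]] : exists Y : {set 'I_L}, X \subset Y /\ #|Y| = k.
  apply: IH; apply/andP; split; last exact: ltnW.
  by rewrite -ltnS ltn_neqAle ne le1.
have : (0 < #|~: Y|)%N.
  by have := cardsC Y; rewrite card_ord cY; move: le2; lia.
case/card_gt0P => a; rewrite in_setC => aY.
exists (a |: Y); split; first exact: subset_trans sY (subsetUr _ _).
by rewrite cardsU1 aY cY.
Qed.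

Lemma growth X : row_full (Vk X d) -> forall K,
  (N <= \rank (Vk X K.+1))%N || (\rank (Bm X) + K <= \rank (Vk X K.+1))%N.
Proof.
move=> F; elim => [|K IH].
  apply/orP; right; rewrite addn0; apply: mxrankS.
  by have := mem_Vk X (ltn0Sn 0); rewrite expr0 mulmx1.
case: (boolP (Bm X *m D^T ^+ K.+1 <= Vk X K.+1)%MS) => hK.
  apply/orP; left.
  have : row_full (Vk X K.+2).
    rewrite -sub1mx; apply: submx_trans (Vk_monoK X (leqnSn K.+1)).
    apply: submx_trans (Vk_closed hK d); by rewrite sub1mx.
  by move/eqP => ->.
have sV := Vk_monoK X (leqnSn K.+1).
have lt : (\rank (Vk X K.+1) < \rank (Vk X K.+2))%N.
  rewrite (ltn_leqif (mxrank_leqif_sup sV)); apply/negP => h.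
  by move: hK; rewrite (submx_trans (mem_Vk X (ltnSn K.+1)) h).
case/orP: IH => h; apply/orP; [left | right].
  exact: leq_trans h (ltnW lt).
by rewrite addnS; apply: leq_trans lt.
Qed.

End Aux.

Unset Implicit Arguments.
Theorem corollary3 (R : realFieldType) (n L s : nat)
  (D : 'M[R]_n.+1) (H : 'M[R]_(n.+1, L)) :
  (0 < s)%N -> (s <= L)%N ->
  sparse_controllable D H s ->
  let N := n.+1 in
  let Rs := minn (\rank H) s in
  let q := (size (mxminpoly D)).-1 in
  exists Kstar : nat,
    steerable_in D H s Kstar /\
    (forall K, steerable_in D H s K -> (Kstar <= K)%N) /\
    (N%:R / Rs%:R <= Kstar%:R :> R) /\
    (Kstar <= minn q (N - Rs + 1))%N /\
    (minn q (N - Rs + 1) <= N)%N.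
Proof.
move=> s0 sL hc N Rs q.
have qd : q = degree_mxminpoly D by rewrite /q size_mxminpoly.
have [X0 [cX0 F0]] := ctrl_full hc.
pose P K := [exists X : {set 'I_L}, (#|X| == s) && row_full (Vk D H X K)].
have PE K : steerable_in D H s K <-> P K.
  rewrite steer_iff; split => [[X [cX F]]|/existsP [X /andP [/eqP cX F]]].
    by apply/existsP; exists X; rewrite cX eqxx F.
  by exists X.
have exP : exists K, P K.
  by exists (degree_mxminpoly D); apply/existsP; exists X0; rewrite cX0 eqxx F0.
have RsH : (Rs <= \rank H)%N by exact: geq_minl.
have Rss : (Rs <= s)%N by exact: geq_minr.
have RsN : (Rs <= N)%N by apply: leq_trans RsH (rank_leq_row H).
have [U [sU cU sBU]] := basis_ex H X0.
have hUR : (#|U| <= Rs)%N.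
  rewrite leq_min; apply/andP; split; first by rewrite cU; exact: rank_Bm_H.
  by rewrite -cX0; exact: subset_leq_card.
have [U' [sUU' cU' eU']] := extend_ex cU (m := Rs) (introT andP (conj hUR RsH)).
have U's : (#|U'| <= s)%N by rewrite eU'.
have [S' [sU'S cS']] := superset_ex (X := U') (k := s) (introT andP (conj U's sL)).
have FS : row_full (Vk D H S' (degree_mxminpoly D)).
  have sB : (Bm H X0 <= Bm H S')%MS.
    apply: submx_trans sBU (Bm_mono _ _); exact: subset_trans sUU' sU'S.
  rewrite -sub1mx; apply: submx_trans (Vk_monoB D _ sB); by rewrite sub1mx.
have rS : (Rs <= \rank (Bm H S'))%N.
  by rewrite -eU' cU'; apply: mxrankS; apply: Bm_mono.
have PS : P (N - Rs + 1)%N.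
  apply/existsP; exists S'; rewrite cS' eqxx /= /row_full eqn_leq rank_leq_col /=.
  have := growth FS (N - Rs); rewrite addn1; case/orP => // h.
  apply: leq_trans h; move: rS RsN; lia.
exists (ex_minn exP); case: ex_minnP => Ks PKs minK.
have [X [cX FX]] : exists X : {set 'I_L}, #|X| = s /\ row_full (Vk D H X Ks).
  by case/existsP: PKs => X /andP [/eqP cX FX]; exists X.
have NK : (N <= Ks * Rs)%N.
  move/eqP: FX => FX; rewrite -[X in (X <= _)%N]FX.
  apply: leq_trans (rank_Vk _ _ _ _) _; rewrite leq_mul2l leq_min rank_Bm_H /=.
  by rewrite -cX rank_Bm_card orbT.
have Rs0 : (0 < Rs)%N by move: NK; case: (Rs) => //; rewrite muln0.
split; first by apply/PE.
split; first by move=> K /PE; exact: minK.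
split.
  by rewrite ler_pdivrMr ?ltr0n // -natrM ler_nat.
split.
  rewrite leq_min qd minK //; last by apply/existsP; exists X0; rewrite cX0 eqxx F0.
  by rewrite minK.
apply: leq_trans (geq_minr _ _) _; move: Rs0 RsN; lia.
Qed.
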